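(* Let $\mu_n$ be the probability measure on the set of $(n,m,d_1,d_2)$-biregular bipartite graphs induced (via the incidence map) by a uniformly random $(d_1,d_2)$-regular hypergraph on $n$ vertices, and let $\mu_n'$ be the uniform measure on the set of all $(n,m,d_1,d_2)$-biregular bipartite graphs. Then $$d_{\mathrm{TV}}(\mu_n,\mu_n')\leq\left(\frac{nd_1}{d_2}\right)^2\left(\frac{4ed_2}{n}\right)^{d_2}.$$
   Context: An $(n,m,d_1,d_2)$-biregular bipartite graph is a simple bipartite graph on $V_1=[n]$, $V_2=[m]$ with all degrees in $V_1$ equal to $d_1$ and in $V_2$ equal to $d_2$, $m=nd_1/d_2$. A $(d_1,d_2)$-regular hypergraph is a hypergraph without repeated hyperedges in which every hyperedge has exactly $d_2$ vertices and every vertex lies in exactly $d_1$ hyperedges; here the vertex set is $[n]$ and the $m=nd_1/d_2$ hyperedges are labeled $e_1,\dots,e_m$; a random one is uniform among all such. The incidence map sends a hypergraph $H$ to the bipartite graph on $V_1=[n]$, $V_2=\{e_1,\dots,e_m\}$ with $i\sim e_j$ iff $i\in e_j$; it is a bijection onto the set of biregular bipartite graphs in which no two vertices of $V_2$ have the same neighborhood. *)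

(* Defs.v *)
From HB Require Import structures.
From mathcomp Require Import all_boot all_order all_algebra.
From mathcomp Require Import all_classical all_reals all_analysis.
Set Implicit Arguments. Unset Strict Implicit. Unset Printing Implicit Defensive.
Import Order.TTheory GRing.Theory Num.Theory.
Local Open Scope ring_scope.

Definition bigraph (n m : nat) := {set 'I_n * 'I_m}.

Definition biregular (n m d1 d2 : nat) (G : bigraph n m) : bool :=
  [forall i : 'I_n, #|[set j : 'I_m | (i, j) \in G]| == d1] &&
  [forall j : 'I_m, #|[set i : 'I_n | (i, j) \in G]| == d2].

(* A hypergraph on vertex set [n] with m labeled hyperedges e_1..e_m. *)
Definition hypergraph (n m : nat) := {ffun 'I_m -> {set 'I_n}}.

Definition regular_hypergraph (n m d1 d2 : nat) (H : hypergraph n m) : bool :=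
  injectiveb H &&
  [forall j : 'I_m, #|H j| == d2] &&
  [forall i : 'I_n, #|[set j : 'I_m | i \in H j]| == d1].

Definition incidence (n m : nat) (H : hypergraph n m) : bigraph n m :=
  [set p : 'I_n * 'I_m | p.1 \in H p.2].

Definition mu_hyp (R : realType) (n m d1 d2 : nat) (G : bigraph n m) : R :=
  (#|[set H : hypergraph n m | regular_hypergraph d1 d2 H && (incidence H == G)]|%:R)
  / (#|[set H : hypergraph n m | regular_hypergraph d1 d2 H]|%:R).

Definition mu_unif (R : realType) (n m d1 d2 : nat) (G : bigraph n m) : R :=
  (G \in [set G' : bigraph n m | biregular d1 d2 G'])%:R
  / (#|[set G' : bigraph n m | biregular d1 d2 G']|%:R).

Definition dTV (R : realType) (T : finType) (mu nu : T -> R) : R :=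
  2^-1 * \sum_(x : T) `|mu x - nu x|.

(* Main.v *)
Require Import Defs.
From HB Require Import structures.
From mathcomp Require Import all_boot all_order all_algebra.
From mathcomp Require Import all_classical all_reals all_analysis.
Import Order.TTheory GRing.Theory Num.Theory.
Local Open Scope ring_scope.
Set Implicit Arguments. Unset Strict Implicit. Unset Printing Implicit Defensive.
From mathcomp Require Import zify ring.
Section Comb.
Local Open Scope nat_scope.

Lemma card_pair_sum (A B : finType) (P : pred A) (Q : A -> B -> bool) :
  #|[set z : A * B | P z.1 && Q z.1 z.2]| = \sum_(a | P a) #|[set b | Q a b]|.
Proof.
rewrite -sum1_card.
under [RHS]eq_bigr do rewrite -sum1_card.
rewrite pair_big_dep; apply: eq_bigl => z; by rewrite !inE.
Qed.

Definition Nb (n m : nat) (G : bigraph n m) (l : 'I_m) : {set 'I_n} :=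
  [set i | (i, l) \in G].
Definition Rw (n m : nat) (G : bigraph n m) (i : 'I_n) : {set 'I_m} :=
  [set l | (i, l) \in G].

Lemma breg_row n m d1 d2 (G : bigraph n m) i :
  biregular d1 d2 G -> #|Rw G i| = d1.
Proof. by case/andP => /forallP/(_ i)/eqP. Qed.

Lemma breg_col n m d1 d2 (G : bigraph n m) l :
  biregular d1 d2 G -> #|Nb G l| = d2.
Proof. by case/andP => _ /forallP/(_ l)/eqP. Qed.

Lemma card_edges1 n m d1 d2 (G : bigraph n m) (X : {set 'I_n}) :
  biregular d1 d2 G -> #|[set q in G | q.1 \in X]| = #|X| * d1.
Proof.
move=> bG.
have -> : [set q in G | q.1 \in X] = [set q : 'I_n * 'I_m | (q.1 \in X) && ((q.1, q.2) \in G)].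
  by apply/setP => -[i l]; rewrite !inE andbC.
rewrite (card_pair_sum (fun i => i \in X) (fun i l => (i, l) \in G)).
under eq_bigr => i _ do rewrite (_ : #|_| = d1) ?(breg_row i bG) //.
by rewrite sum_nat_const.
Qed.

Lemma card_edges2 n m d1 d2 (G : bigraph n m) (Y : {set 'I_m}) :
  biregular d1 d2 G -> #|[set q in G | q.2 \in Y]| = #|Y| * d2.
Proof.
move=> bG.
pose sw := fun q : 'I_m * 'I_n => (q.2, q.1).
have inj : injective sw by move=> [a b] [c d] [-> ->].
have -> : [set q in G | q.2 \in Y] = sw @: [set q : 'I_m * 'I_n | (q.1 \in Y) && ((q.2, q.1) \in G)].
  apply/setP => -[i l]; rewrite !inE; apply/andP/imsetP.
    by case=> h1 h2; exists (l, i); rewrite // inE h2 h1.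
  by case=> -[a b]; rewrite inE => /andP[h1 h2] [-> ->].
rewrite card_imset // (card_pair_sum (fun l => l \in Y) (fun l i => (i, l) \in G)).
under eq_bigr => l _ do rewrite (_ : #|_| = d2) ?(breg_col l bG) //.
by rewrite sum_nat_const.
Qed.

Lemma card_edges n m d1 d2 (G : bigraph n m) :
  biregular d1 d2 G -> #|G| = n * d1.
Proof.
move=> bG; have := card_edges1 [set: 'I_n] bG; rewrite cardsT card_ord => <-.
have -> // : [set q in G | q.1 \in [set: 'I_n]] = G.
by apply/setP => q; rewrite !inE andbT.
Qed.

End Comb.
Section Switch.
Local Open Scope nat_scope.

Definition swp (T : eqType) (a b x : T) := if x == a then b else if x == b then a else x.

Lemma swpK (T : eqType) (a b : T) : involutive (swp a b).
Proof.
move=> x; rewrite /swp.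
case: (x =P a) => [->|na]; first by rewrite eqxx; case: (b =P a).
case: (x =P b) => [->|nb]; first by rewrite eqxx.
by rewrite (introF eqP na) (introF eqP nb).
Qed.

Lemma swp_inj (T : eqType) (a b : T) : injective (swp a b).
Proof. exact: inv_inj (@swpK T a b). Qed.

Lemma swpL (T : eqType) (a b : T) : swp a b a = b.
Proof. by rewrite /swp eqxx. Qed.
Lemma swpR (T : eqType) (a b : T) : swp a b b = a.
Proof. by rewrite /swp eqxx; case: (b =P a). Qed.
Lemma swpD (T : eqType) (a b x : T) : x != a -> x != b -> swp a b x = x.
Proof. by rewrite /swp => /negPf-> /negPf->. Qed.

Definition fmap (n m : nat) (s u : 'I_n) (k l : 'I_m) (p : 'I_n * 'I_m) :=
  if (p.1 == s) || (p.1 == u) then (p.1, swp k l p.2) else p.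
Definition gmap (n m : nat) (s u : 'I_n) (k l : 'I_m) (p : 'I_n * 'I_m) :=
  if (p.2 == k) || (p.2 == l) then (swp s u p.1, p.2) else p.

Lemma fmapK n m s u k l : involutive (@fmap n m s u k l).
Proof.
move=> [i l']; rewrite {2}/fmap /=.
by case: ifP => h; rewrite /fmap /= h ?swpK.
Qed.

Definition swg (n m : nat) (k : 'I_m) (G : bigraph n m) (x : 'I_n * ('I_n * 'I_m)) : bigraph n m :=
  fmap x.1 x.2.1 k x.2.2 @^-1: G.

Lemma swgK n m k (G : bigraph n m) x : swg k (swg k G x) x = G.
Proof. by apply/setP => p; rewrite /swg !inE fmapK. Qed.

Definition fwd (n m : nat) (j k : 'I_m) (G : bigraph n m) (x : 'I_n * ('I_n * 'I_m)) :=
  let: (s, (u, l)) := x in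
  [&& (s, j) \in G, (s, k) \in G, (u, l) \in G, (u, j) \notin G, (u, k) \notin G & (s, l) \notin G].

Lemma fwd_facts n m j k (G : bigraph n m) s u l :
  fwd j k G (s, (u, l)) -> [/\ s != u, l != k & l != j].
Proof.
case/and5P=> sj sk ul uj /andP[uk sl]; split.
- by apply/eqP=> e; move: uj; rewrite -e sj.
- by apply/eqP=> e; move: uk; rewrite -e ul.
- by apply/eqP=> e; move: uj; rewrite -e ul.
Qed.

Lemma swg_g n m j k (G : bigraph n m) s u l :
  fwd j k G (s, (u, l)) -> swg k G (s, (u, l)) = gmap s u k l @^-1: G.
Proof.
move=> fw; have [su lk lj] := fwd_facts fw.
case/and5P: fw => sj sk ul uj /andP[uk sl].
apply/setP => -[i l']; rewrite /swg !inE /fmap /gmap /=.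
have us : u != s by rewrite eq_sym.
have kl : k != l by rewrite eq_sym.
have ne := fun (a b : 'I_m) (h : a <> b) => introF eqP h.
case: (i =P s) => [->|nis] /=.
  case: (l' =P k) => [->|lk'] /=; first by rewrite swpL swpL (negPf sl) (negPf uk).
  case: (l' =P l) => [->|ll'] /=; first by rewrite swpR swpL sk ul.
  by rewrite swpD ?ne.
case: (i =P u) => [->|niu] /=.
  case: (l' =P k) => [->|lk'] /=; first by rewrite swpL swpR ul sk.
  case: (l' =P l) => [->|ll'] /=; first by rewrite swpR swpR (negPf sl) (negPf uk).
  by rewrite swpD ?ne.
by rewrite swpD; [case: ifP | apply/eqP | apply/eqP].
Qed.
End Switch.
Section Switch2.
Local Open Scope nat_scope.

Lemma swg_breg n m d1 d2 j k (G : bigraph n m) s u l :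
  fwd j k G (s, (u, l)) -> biregular d1 d2 G -> biregular d1 d2 (swg k G (s, (u, l))).
Proof.
move=> fw bG; apply/andP; split; apply/forallP => i.
  case: (boolP ((i == s) || (i == u))) => h.
    have -> : [set l' | (i, l') \in swg k G (s, (u, l))] = swp k l @^-1: Rw G i.
      by apply/setP => l'; rewrite !inE /fmap /= h.
    by rewrite card_preimset ?(breg_row i bG) //; apply: swp_inj.
  have -> : [set l' | (i, l') \in swg k G (s, (u, l))] = Rw G i.
    by apply/setP => l'; rewrite !inE /fmap /= (negPf h).
  by rewrite (breg_row i bG).
rewrite (swg_g fw).
case: (boolP ((i == k) || (i == l))) => h.
  have -> : [set i' | (i', i) \in gmap s u k l @^-1: G] = swp s u @^-1: Nb G i.
    by apply/setP => l'; rewrite !inE /gmap /= h.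
  by rewrite card_preimset ?(breg_col i bG) //; apply: swp_inj.
have -> : [set i' | (i', i) \in gmap s u k l @^-1: G] = Nb G i.
  by apply/setP => l'; rewrite !inE /gmap /= (negPf h).
by rewrite (breg_col i bG).
Qed.

Definition At (n m d1 d2 : nat) (j k : 'I_m) (t : nat) : {set bigraph n m} :=
  [set G : bigraph n m | biregular d1 d2 G && (#|Nb G j :&: Nb G k| == t)].

Lemma swg_At n m d1 d2 j k t (G : bigraph n m) s u l :
  j != k -> fwd j k G (s, (u, l)) -> G \in At n d1 d2 j k t ->
  swg k G (s, (u, l)) \in At n d1 d2 j k t.-1.
Proof.
move=> jk fw; rewrite !inE => /andP[bG /eqP ct].
rewrite (swg_breg fw bG) /=.
have [su lk lj] := fwd_facts fw.
move: (fw) => /and5P[sj sk ul uj /andP[uk sl]].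
have -> : Nb (swg k G (s, (u, l))) j :&: Nb (swg k G (s, (u, l))) k
         = (Nb G j :&: Nb G k) :\ s.
  rewrite (swg_g fw); apply/setP => i; rewrite !inE /gmap /=.
  rewrite (negPf jk) eqxx /= (negPf (negbT (introF eqP (fun e : j = l => (negP lj) (introT eqP (esym e)))))) /=.
  case: (i =P s) => [->|nis] /=; first by rewrite swpL (negPf uk) andbF.
  case: (i =P u) => [->|niu] /=; first by rewrite (negPf uj).
  by rewrite swpD //; apply/eqP.
rewrite -ct (cardsD1 s (Nb G j :&: Nb G k)) !inE sj sk.
by apply/eqP.
Qed.

Lemma swg_bwd n m j k (G : bigraph n m) s u l :
  j != k -> fwd j k G (s, (u, l)) ->
  [&& (s, j) \in swg k G (s, (u, l)), (u, k) \in swg k G (s, (u, l)) & (s, l) \in swg k G (s, (u, l))].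
Proof.
move=> jk fw; have [su lk lj] := fwd_facts fw.
move: (fw) => /and5P[sj sk ul uj /andP[uk sl]].
rewrite !inE /fmap /= !eqxx /= orbT swpL swpR ul sk swpD ?sj //.
by rewrite eq_sym.
Qed.

End Switch2.
Section Count.
Local Open Scope nat_scope.

Definition bwd (n m : nat) (j k : 'I_m) (G : bigraph n m) (x : 'I_n * ('I_n * 'I_m)) :=
  [&& (x.1, j) \in G, (x.2.1, k) \in G & (x.1, x.2.2) \in G].

Lemma fwd_lower n m d1 d2 j k (G : bigraph n m) :
  biregular d1 d2 G ->
  #|Nb G j :&: Nb G k| * (n * d1 - 3 * (d1 * d2)) <= #|[set x | fwd j k G x]|.
Proof.
move=> bG.
pose Fq := fun (s : 'I_n) (q : 'I_n * 'I_m) =>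
  [&& q \in G, (q.1, j) \notin G, (q.1, k) \notin G & (s, q.2) \notin G].
have -> : [set x | fwd j k G x] =
  [set x : 'I_n * ('I_n * 'I_m) | ((x.1, j) \in G) && ((x.1, k) \in G) && Fq x.1 x.2].
  by apply/setP => -[s [u l]]; rewrite !inE /fwd /Fq /= -!andbA.
rewrite (card_pair_sum (fun s => ((s, j) \in G) && ((s, k) \in G)) Fq).
have -> : #|Nb G j :&: Nb G k| * (n * d1 - 3 * (d1 * d2)) =
   \sum_(s | ((s, j) \in G) && ((s, k) \in G)) (n * d1 - 3 * (d1 * d2)).
  rewrite sum_nat_const; congr (_ * _); apply: eq_card => s; by rewrite !inE.
apply: leq_sum => s /andP[sj sk].
rewrite leq_subLR.
have sub : G \subset [set q | Fq s q] :|: [set q in G | q.1 \in Nb G j]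
                :|: [set q in G | q.1 \in Nb G k] :|: [set q in G | q.2 \in Rw G s].
  apply/fintype.subsetP => -[i l] qG; rewrite !inE /Fq /= qG /=.
  by case: ((i, j) \in G); case: ((i, k) \in G); case: ((s, l) \in G).
have := subset_leq_card sub.
rewrite (card_edges bG) => h.
apply: (leq_trans h).
apply: (leq_trans (leq_card_setU _ _)).
rewrite (card_edges2 _ bG) (breg_row s bG).
apply: (@leq_trans (#|[set q | Fq s q]| + #|[set q in G | q.1 \in Nb G j]| + #|[set q in G | q.1 \in Nb G k]| + d1 * d2)).
  rewrite leq_add2r; apply: (leq_trans (leq_card_setU _ _)).
  rewrite leq_add2r; exact: (leq_card_setU _ _).
rewrite (card_edges1 _ bG) (card_edges1 _ bG) !(breg_col _ bG).
by rewrite (mulnC d2 d1); lia.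
Qed.

End Count.
Section Count2.
Local Open Scope nat_scope.

Lemma bwd_upper n m d1 d2 j k (G : bigraph n m) :
  biregular d1 d2 G -> #|[set x | bwd j k G x]| <= d2 * d1 * d2.
Proof.
move=> bG.
pose psi := fun x : 'I_n * ('I_n * 'I_m) => ((x.1, x.2.2), x.2.1).
have inj : injective psi by move=> [a [b c]] [a' [b' c']] [-> -> ->].
rewrite -(card_imset _ inj).
have sub : psi @: [set x | bwd j k G x] \subset finset.setX [set q in G | q.1 \in Nb G j] (Nb G k).
  apply/fintype.subsetP => y /imsetP[[s [u l]]]; rewrite !inE /bwd /= => /and3P[sj uk sl] ->.
  by rewrite /psi /= sl sj uk.
apply: (leq_trans (subset_leq_card sub)).
by rewrite cardsX (card_edges1 _ bG) !(breg_col _ bG).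
Qed.

Lemma count_step n m d1 d2 (j k : 'I_m) t : j != k ->
  #|At n d1 d2 j k t| * (t * (n * d1 - 3 * (d1 * d2))) <= #|At n d1 d2 j k t.-1| * (d2 * d1 * d2).
Proof.
move=> jk.
pose Dom := [set z : bigraph n m * ('I_n * ('I_n * 'I_m)) | (z.1 \in At n d1 d2 j k t) && fwd j k z.1 z.2].
pose Cod := [set z : bigraph n m * ('I_n * ('I_n * 'I_m)) | (z.1 \in At n d1 d2 j k t.-1) && bwd j k z.1 z.2].
pose phi := fun z : bigraph n m * ('I_n * ('I_n * 'I_m)) => (swg k z.1 z.2, z.2).
have inj : injective phi.
  move=> [G1 x1] [G2 x2] [e1 e2]; rewrite /= in e1 e2; subst x2.
  by rewrite -(swgK k G1 x1) e1 swgK.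
have sub : phi @: Dom \subset Cod.
  apply/fintype.subsetP => y /imsetP[[G [s [u l]]]]; rewrite /Dom finset.in_set /= => /andP[GA fw] ->.
  rewrite /Cod finset.in_set /phi /=.
  by rewrite (swg_At jk fw GA) /=; have := swg_bwd jk fw.
have h1 := subset_leq_card sub; rewrite (card_imset _ inj) in h1.
have -> : #|At n d1 d2 j k t| * (t * (n * d1 - 3 * (d1 * d2)))
  = \sum_(G | G \in At n d1 d2 j k t) (t * (n * d1 - 3 * (d1 * d2))).
  by rewrite sum_nat_const.
have -> : #|At n d1 d2 j k t.-1| * (d2 * d1 * d2)
  = \sum_(G | G \in At n d1 d2 j k t.-1) (d2 * d1 * d2).
  by rewrite sum_nat_const.
apply: (@leq_trans #|Dom|).
  rewrite (card_pair_sum (fun G => G \in At n d1 d2 j k t) (fwd j k)).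
  apply: leq_sum => G; rewrite inE => /andP[bG /eqP ct].
  by rewrite -{1}ct; apply: fwd_lower.
apply: (leq_trans h1).
rewrite (card_pair_sum (fun G => G \in At n d1 d2 j k t.-1) (bwd j k)).
apply: leq_sum => G; rewrite inE => /andP[bG _].
exact: bwd_upper.
Qed.

End Count2.
Section Chain.
Local Open Scope nat_scope.

Lemma chain n m d1 d2 (j k : 'I_m) t : j != k -> 0 < d1 ->
  #|At n d1 d2 j k t| * t`! * (n - 3 * d2) ^ t <= #|At n d1 d2 j k 0| * (d2 * d2) ^ t.
Proof.
move=> jk d1p; elim: t => [|t IH]; first by rewrite fact0 !expn0 !muln1.
have st := count_step n d1 d2 t.+1 jk; rewrite /= in st.
have st' : #|At n d1 d2 j k t.+1| * (t.+1 * (n - 3 * d2)) <= #|At n d1 d2 j k t| * (d2 * d2).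
  rewrite -(leq_pmul2r d1p).
  have e1 : n * d1 - 3 * (d1 * d2) = (n - 3 * d2) * d1 by rewrite mulnBl; congr (_ - _); ring.
  rewrite e1 in st.
  apply: (leq_trans _ (leq_trans st _)); first by rewrite !mulnA.
  by rewrite -!mulnA leq_mul2l (mulnC d1) mulnA leqnn orbT.
rewrite factS expnS.
apply: (@leq_trans (#|At n d1 d2 j k t| * (d2 * d2) * (t`! * (n - 3 * d2) ^ t))).
  apply: (leq_trans _ (leq_mul st' (leqnn _))).
  by rewrite -!mulnA leq_mul2l [t`! * _]mulnCA leqnn orbT.
apply: (@leq_trans (#|At n d1 d2 j k 0| * (d2 * d2) ^ t * (d2 * d2))).
  by rewrite mulnAC [#|At n d1 d2 j k t| * _]mulnA leq_mul2r IH orbT.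
by rewrite expnSr !mulnA.
Qed.

Definition Bs n m d1 d2 : {set bigraph n m} := [set G : bigraph n m | biregular d1 d2 G].
Definition Apair n m d1 d2 (j k : 'I_m) : {set bigraph n m} :=
  [set G : bigraph n m | biregular d1 d2 G && (Nb G j == Nb G k)].

Lemma pair_bound n m d1 d2 (j k : 'I_m) : j != k -> 0 < d1 ->
  #|Apair n d1 d2 j k| * d2`! * (n - 3 * d2) ^ d2 <= #|Bs n m d1 d2| * (d2 * d2) ^ d2.
Proof.
move=> jk d1p.
have ch := @chain n m d1 d2 j k d2 jk d1p.
apply: (@leq_trans (#|At n d1 d2 j k d2| * d2`! * (n - 3 * d2) ^ d2)).
  rewrite -!mulnA leq_mul2r; apply/orP; right; apply: subset_leq_card.
  apply/fintype.subsetP => G; rewrite !inE => /andP[bG /eqP e].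
  by rewrite bG /= e finset.setIid (breg_col k bG).
apply: (leq_trans ch).
rewrite leq_mul2r; apply/orP; right; apply: subset_leq_card.
by apply/fintype.subsetP => G; rewrite !inE => /andP[-> _].
Qed.

End Chain.
Section Hyp.
Local Open Scope nat_scope.

Lemma inc_inj n m : injective (@incidence n m).
Proof.
move=> H1 H2 e; apply/ffunP => l; apply/setP => i.
have := congr1 (fun G : bigraph n m => (i, l) \in G) e.
by rewrite /incidence !inE.
Qed.

Lemma inc_breg n m d1 d2 (H : hypergraph n m) :
  regular_hypergraph d1 d2 H -> biregular d1 d2 (incidence H).
Proof.
case/andP=> /andP[_ /forallP cH] /forallP rH; apply/andP; split; apply/forallP => x.
  have -> : [set j | (x, j) \in incidence H] = [set j | x \in H j] by apply/setP => j; rewrite !inE.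
  exact: rH.
have -> : [set i | (i, x) \in incidence H] = H x by apply/setP => i; rewrite !inE.
exact: cH.
Qed.

Lemma good_hyp n m d1 d2 (G : bigraph n m) :
  biregular d1 d2 G -> (forall j k, Nb G j = Nb G k -> j = k) ->
  regular_hypergraph d1 d2 [ffun l => Nb G l] && (incidence [ffun l => Nb G l] == G).
Proof.
move=> bG dG; apply/andP; split.
  apply/andP; split; first (apply/andP; split).
  - by apply/injectiveP => j k; rewrite !ffunE; apply: dG.
  - by apply/forallP => l; rewrite ffunE (breg_col l bG).
  - apply/forallP => i; rewrite -(breg_row i bG); apply/eqP; apply: eq_card => l.
    by rewrite !inE ffunE inE.
by apply/eqP/setP => -[i l]; rewrite !inE ffunE inE.
Qed.

Definition cnt n m d1 d2 (G : bigraph n m) :=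
  #|[set H : hypergraph n m | regular_hypergraph d1 d2 H && (incidence H == G)]|.

Lemma cnt_le1 n m d1 d2 (G : bigraph n m) : cnt d1 d2 G <= 1.
Proof.
apply/card_le1_eqP => H1 H2; rewrite !inE => /andP[_ /eqP e1] /andP[_ /eqP e2].
by apply: inc_inj; rewrite e1 e2.
Qed.

Lemma cnt_breg n m d1 d2 (G : bigraph n m) : 0 < cnt d1 d2 G -> G \in Bs n m d1 d2.
Proof.
rewrite /cnt card_gt0 => /set0Pn[H]; rewrite !inE => /andP[rH /eqP <-].
exact: inc_breg.
Qed.

Lemma sum_cnt n m d1 d2 :
  \sum_(G : bigraph n m) cnt d1 d2 G = #|[set H : hypergraph n m | regular_hypergraph d1 d2 H]|.
Proof.
rewrite /cnt.
under eq_bigr do rewrite -sum1_card big_mkcond /=.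
rewrite exchange_big /= -sum1_card [RHS]big_mkcond /=.
apply: eq_bigr => H _; rewrite inE.
case: (boolP (regular_hypergraph d1 d2 H)) => rH.
  rewrite (bigD1 (incidence H)) //= big1 ?addn0 ?inE ?rH ?eqxx //.
  by move=> G /negPf nG; rewrite inE eq_sym nG andbF.
by rewrite big1 // => G _; rewrite inE (negPf rH).
Qed.

Definition Bad n m d1 d2 : {set bigraph n m} :=
  [set G : bigraph n m | biregular d1 d2 G &&
     [exists p : 'I_m * 'I_m, (p.1 != p.2) && (Nb G p.1 == Nb G p.2)]].

Lemma beta_le n m d1 d2 (G : bigraph n m) :
  (G \in Bs n m d1 d2) <= cnt d1 d2 G + (G \in Bad n m d1 d2).
Proof.
rewrite !inE; case: (boolP (biregular d1 d2 G)) => //= bG.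
case: (boolP [exists p : 'I_m * 'I_m, (p.1 != p.2) && (Nb G p.1 == Nb G p.2)]) => [_|nE].
  by rewrite addn1.
rewrite addn0 /cnt card_gt0; apply/set0Pn; exists [ffun l => Nb G l].
rewrite inE; apply: good_hyp => // j k e.
apply/eqP; apply: contraNT nE => jk; apply/existsP; exists (j, k).
by rewrite /= jk e eqxx.
Qed.

Lemma card_Bad n m d1 d2 :
  #|Bad n m d1 d2| <= \sum_(p : 'I_m * 'I_m | p.1 != p.2) #|Apair n d1 d2 p.1 p.2|.
Proof.
rewrite -sum1_card.
under [X in _ <= X]eq_bigr do rewrite -sum1_card.
rewrite (exchange_big_dep predT) //=.
rewrite [X in X <= _]big_mkcond; apply: leq_sum => G _.
case: ifP => //; rewrite inE => /andP[bG /existsP[p /andP[pn pe]]].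
rewrite (bigD1 p) /=; last by rewrite pn inE bG pe.
by rewrite -[1]addn0 leq_add2l.
Qed.

End Hyp.
Section Real.

Lemma e_ge1 (R : realType) : 1 <= expR 1 :> R.
Proof. by apply: le_trans (expR_ge1Dx 1); rewrite lerDl. Qed.

Lemma succ_pow (R : realType) (k : nat) :
  (k.+1 ^ k)%:R <= expR 1 * (k ^ k)%:R :> R.
Proof.
case: k => [|k]; first by rewrite !expn0 mulr1 e_ge1.
set K : R := k.+1%:R.
have Kp : 0 < K by rewrite ltr0n.
have e1 : (k.+2 ^ k.+1)%:R = (K ^+ k.+1) * (1 + K^-1) ^+ k.+1 :> R.
  rewrite -exprMn mulrDr mulr1 mulfV ?gt_eqF // natrX.
  by congr (_ ^+ _); rewrite -addn1 natrD /K.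
rewrite e1 natrX -/K mulrC ler_pM2r ?exprn_gt0 //.
have -> : expR 1 = expR (K^-1) ^+ k.+1 :> R.
  by rewrite -expRM_natl /K mulfV // gt_eqF.
apply: lerXn2r; rewrite ?nnegrE ?expR_ge0 //.
  by rewrite addr_ge0 // invr_ge0 ltW.
exact: expR_ge1Dx.
Qed.

Lemma fact_bound (R : realType) (k : nat) :
  (k ^ k)%:R <= (k`!)%:R * expR 1 ^+ k :> R.
Proof.
elim: k => [|k IH]; first by rewrite expn0 fact0 expr0 mulr1.
rewrite expnS natrM factS natrM exprS.
apply: (le_trans (ler_wpM2l (ler0n _ _) (succ_pow R k))).
apply: (le_trans (ler_wpM2l (ler0n _ _) (ler_wpM2l (expR_ge0 1) IH))).
by rewrite le_eqVlt; apply/orP; left; apply/eqP; ring.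
Qed.

End Real.
Section Real2.

Lemma pair_nat n m d1 d2 (j k : 'I_m) : j != k -> (0 < d1)%N -> (0 < d2)%N -> (4 * d2 <= n)%N ->
  (#|Apair n d1 d2 j k| * n ^ d2 * d2`! <= #|Bs n m d1 d2| * (4 * d2) ^ d2 * d2 ^ d2)%N.
Proof.
move=> jk d1p d2p hn.
have P := @pair_bound n m d1 d2 j k jk d1p.
have hc : (n <= 4 * (n - 3 * d2))%N by lia.
apply: (@leq_trans (#|Apair n d1 d2 j k| * (4 * (n - 3 * d2)) ^ d2 * d2`!)).
  by rewrite leq_mul2r leq_mul2l (leq_exp2r _ _ d2p) hc !orbT.
apply: (@leq_trans (4 ^ d2 * (#|Bs n m d1 d2| * (d2 * d2) ^ d2))).
  rewrite expnMn.
  have -> : (#|Apair n d1 d2 j k| * (4 ^ d2 * (n - 3 * d2) ^ d2) * d2`!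
     = 4 ^ d2 * (#|Apair n d1 d2 j k| * d2`! * (n - 3 * d2) ^ d2))%N.
    by rewrite mulnCA -!mulnA; congr (_ * (_ * _)); rewrite mulnC.
  by rewrite leq_mul2l P orbT.
by rewrite !expnMn; apply/eqP; lia.
Qed.

Lemma apair_real (R : realType) n m d1 d2 (j k : 'I_m) :
  j != k -> (0 < n)%N -> (0 < d2)%N -> (m * d2 = n * d1)%N ->
  (#|Apair n d1 d2 j k|)%:R <= (#|Bs n m d1 d2|)%:R * ((4%:R * expR 1 * d2%:R) / n%:R) ^+ d2 :> R.
Proof.
move=> jk np d2p hm.
have d1p : (0 < d1)%N.
  case: d1 hm => // hm; have := ltn_ord j; case: m j k jk hm => //= m' j k jk.
  by rewrite muln0 => /eqP; rewrite muln_eq0 (gtn_eqF d2p) orbF.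
have Np : 0 < n%:R :> R by rewrite ltr0n.
have Ap : (#|Apair n d1 d2 j k| <= #|Bs n m d1 d2|)%N.
  by apply: subset_leq_card; apply/fintype.subsetP => G; rewrite !inE => /andP[-> _].
case: (leqP (4 * d2) n) => hn.
  have N := pair_nat jk d1p d2p hn.
  have NR : (#|Apair n d1 d2 j k| * n ^ d2)%:R * (d2`!)%:R
            <= (#|Bs n m d1 d2| * (4 * d2) ^ d2)%:R * ((d2`!)%:R * expR 1 ^+ d2) :> R.
    apply: le_trans (ler_wpM2l (ler0n _ _) (fact_bound R d2)).
    by rewrite -!natrM ler_nat.
  have NR2 : (#|Apair n d1 d2 j k| * n ^ d2)%:R
            <= (#|Bs n m d1 d2| * (4 * d2) ^ d2)%:R * expR 1 ^+ d2 :> R.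
    rewrite -(@ler_pM2r _ (d2`!)%:R) ?ltr0n ?fact_gt0 //.
    apply: (le_trans NR); rewrite le_eqVlt; apply/orP; left; apply/eqP; ring.
  rewrite expr_div_n mulrA ler_pdivlMr ?exprn_gt0 //.
  apply: (le_trans _ (le_trans NR2 _)); first by rewrite natrM natrX.
  rewrite natrM natrX natrM !exprMn le_eqVlt; apply/orP; left; apply/eqP; ring.
have q1 : 1 <= (4%:R * expR 1 * d2%:R) / n%:R :> R.
  rewrite ler_pdivlMr // mul1r.
  apply: (@le_trans _ _ (4%:R * d2%:R)).
    by rewrite -natrM ler_nat ltnW.
  rewrite -mulrA [expR 1 * _]mulrC mulrA ler_peMr ?e_ge1 //.
apply: (@le_trans _ _ (#|Bs n m d1 d2|)%:R); first by rewrite ler_nat.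
by rewrite ler_peMr ?exprn_ege1.
Qed.

End Real2.
Unset Implicit Arguments.
Theorem lemma6p9 (R : realType) (n m d1 d2 : nat) :
  (0 < n)%N -> (0 < d2)%N -> (m * d2 = n * d1)%N ->
  (exists H : hypergraph n m, regular_hypergraph d1 d2 H) ->
  dTV (@mu_hyp R n m d1 d2) (@mu_unif R n m d1 d2)
    <= ((n * d1)%:R / d2%:R) ^+ 2
       * ((4%:R * expR 1 * d2%:R) / n%:R) ^+ d2.
Proof.
move=> np d2p hm [H0 rH0].
set q := (4%:R * expR 1 * d2%:R) / n%:R.
set h := #|[set H : hypergraph n m | regular_hypergraph d1 d2 H]|.
set b := #|Bs n m d1 d2|.
have hp : (0 < h)%N by rewrite card_gt0; apply/set0Pn; exists H0; rewrite inE.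
have sc := sum_cnt n m d1 d2; rewrite -/h in sc.
have sb : (\sum_(G : bigraph n m) (G \in Bs n m d1 d2 : nat))%N = b.
  rewrite /b -sum1_card [RHS]big_mkcond /=; apply: eq_bigr => G _; by case: (G \in _).
have cb : forall G : bigraph n m, (cnt d1 d2 G <= (G \in Bs n m d1 d2))%N.
  move=> G; have := cnt_le1 d1 d2 G; case e: (cnt d1 d2 G) => [|[|]] //= _.
  by rewrite cnt_breg // e.
have hb : (h <= b)%N by rewrite -sc -sb; apply: leq_sum => G _; exact: cb.
have bp : (0 < b)%N by apply: leq_trans hb.
have hbad : (b <= h + #|Bad n m d1 d2|)%N.
  rewrite -sc -sb -sum1_card [X in (_ + X)%N]big_mkcond /= -big_split /=.
  apply: leq_sum => G _; apply: (leq_trans (beta_le d1 d2 G)); by case: (G \in _).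
have hR : 0 < h%:R :> R by rewrite ltr0n.
have bR : 0 < b%:R :> R by rewrite ltr0n.
have pw : forall G : bigraph n m,
  `|@mu_hyp R n m d1 d2 G - @mu_unif R n m d1 d2 G|
   = (cnt d1 d2 G)%:R / h%:R + (G \in Bs n m d1 d2)%:R / b%:R - 2 * ((cnt d1 d2 G)%:R / b%:R).
  move=> G; rewrite /mu_hyp /mu_unif -/h -/(cnt d1 d2 G) -/(Bs n m d1 d2) -/b.
  have := cb G; have := cnt_le1 d1 d2 G.
  case: (cnt d1 d2 G) => [|[|]] //= _.
    by move=> _; rewrite !mul0r sub0r add0r mulr0 subr0 normrN ger0_norm // divr_ge0.
  case: (G \in Bs n m d1 d2) => //= _.
  rewrite ger0_norm; last first.
    by rewrite subr_ge0 !mul1r lef_pV2 ?posrE // ler_nat.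
  by rewrite !mul1r mulr2n mulrDl !mul1r opprD addrA addrK.
have dT : dTV (@mu_hyp R n m d1 d2) (@mu_unif R n m d1 d2) = (b%:R - h%:R) / b%:R.
  rewrite /dTV; under eq_bigr do rewrite pw.
  rewrite sumrB big_split /= -!mulr_suml -!mulr_sumr -!mulr_suml -!natr_sum sc sb.
  rewrite mulfV ?gt_eqF // mulfV ?gt_eqF //.
  by field; rewrite gt_eqF.
rewrite dT ler_pdivrMr //.
have e1 : (b%:R - h%:R : R) <= (#|Bad n m d1 d2|)%:R.
  by rewrite lerBlDl -natrD ler_nat.
apply: (le_trans e1).
have e2 : (#|Bad n m d1 d2|)%:R <= \sum_(p : 'I_m * 'I_m | p.1 != p.2) (#|Apair n d1 d2 p.1 p.2|)%:R :> R.
  by rewrite -natr_sum ler_nat card_Bad.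
apply: (le_trans e2).
have e3 : \sum_(p : 'I_m * 'I_m | p.1 != p.2) (#|Apair n d1 d2 p.1 p.2|)%:R
          <= \sum_(p : 'I_m * 'I_m) (b%:R * q ^+ d2) :> R.
  rewrite [X in _ <= X](bigID (fun p : 'I_m * 'I_m => p.1 != p.2)) /=.
  apply: ler_wpDr; first by apply: sumr_ge0 => p _; rewrite mulr_ge0 ?exprn_ge0 ?divr_ge0 ?mulr_ge0 ?expR_ge0.
  by apply: ler_sum => p pn; apply: apair_real.
apply: (le_trans e3).
have em : (n * d1)%:R / d2%:R = m%:R :> R.
  by rewrite -hm natrM mulfK // gt_eqF // ltr0n.
rewrite em sumr_const card_prod card_ord -(mulr_natl (b%:R * q ^+ d2) (m * m)) natrM.
by rewrite le_eqVlt; apply/orP; left; apply/eqP; ring.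
Qed.
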